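(* Let $(Q,\rightarrow)$ be a finite transition system, $\mathscr{U}$ a preorder on $Q$, $\mathscr{R}\subseteq\mathscr{U}$ a preorder with $\mathscr{R}\circ\rightarrow^{-1}\subseteq\rightarrow^{-1}\circ\mathscr{U}$, $\mathscr{P}\subseteq\mathscr{R}$ an equivalence relation with a representative $E.\mathrm{rep}\in E$ fixed for each block $E$ of $\mathscr{P}$, and $\mathit{NotRel}=\mathscr{U}\setminus\mathscr{R}$. Then: 1. if $E\rightarrow B$ is a $(\mathscr{P},\mathscr{R})$-splitter transition of type 1, then $\mathit{NotRel}(B)\neq\emptyset$; 2. if there is no $(\mathscr{P},\mathscr{R})$-splitter transition of type 1 and $E\rightarrow B$ is a $(\mathscr{P},\mathscr{R})$-splitter transition of type 2, then $\mathit{NotRel}(B)\neq\emptyset$.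
   Context: $\mathscr{R}^{-1}=\{(y,x)\mid(x,y)\in\mathscr{R}\}$, $\mathscr{S}\circ\mathscr{R}=\{(x,y)\mid\exists z.\ x\,\mathscr{R}\,z\wedge z\,\mathscr{S}\,y\}$, $\mathscr{R}(X)=\{q'\mid\exists q\in X.\ q\,\mathscr{R}\,q'\}$, $\rightarrow^{-1}(Y)=\{q\mid\exists y\in Y.\ q\rightarrow y\}$. A preorder is a reflexive transitive relation; its blocks are $[q]_{\mathscr{R}}=\{q'\mid q\,\mathscr{R}\,q'\wedge q'\,\mathscr{R}\,q\}$. For sets, $X\rightarrow Y$ means some $x\in X,y\in Y$ have $x\rightarrow y$; $X\,\mathscr{R}\,Y$ means $(X\times Y)\cap\mathscr{R}\neq\emptyset$. $\mathrm{RelCount}_{(\mathscr{P},\mathscr{R})}(E,B)=|\{E'\text{ block of }\mathscr{P}\mid E.\mathrm{rep}\rightarrow E'\wedge B\,\mathscr{R}\,E'\}|$. A splitter transition of type 1 is a pair ($E$ block of $\mathscr{P}$, $B$ block of $\mathscr{R}$) with $E\rightarrow B$ and $\mathrm{RelCount}_{(\mathscr{P},\mathscr{R})}(E,B)=0$; of type 2, a pair with $E.\mathrm{rep}\rightarrow B$, $\mathrm{RelCount}_{(\mathscr{P},\mathscr{R})}(E,B)=|\{[b]_{\mathscr{P}}\subseteq B\mid E.\mathrm{rep}\rightarrow b\}|$ and $E\not\subseteq\rightarrow^{-1}(B)$. *)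

(* Defs.v *)
From mathcomp Require Import all_boot.
Set Implicit Arguments. Unset Strict Implicit. Unset Printing Implicit Defensive.

Section Defs.
Variable Q : finType.

Definition is_preorder (r : rel Q) : Prop := reflexive r /\ transitive r.
Definition is_equivalence (r : rel Q) : Prop :=
  reflexive r /\ symmetric r /\ transitive r.

Definition block (r : rel Q) (q : Q) : {set Q} := [set q' | r q q' && r q' q].
Definition is_block (r : rel Q) (E : {set Q}) : bool := [exists q, E == block r q].

Definition set_rel (r : rel Q) (X Y : {set Q}) : bool :=
  [exists x in X, exists y in Y, r x y].

Definition pre (tr : rel Q) (Y : {set Q}) : {set Q} := [set q | [exists y in Y, tr q y]].

Definition RelCount (tr P R : rel Q) (rep : {set Q} -> Q) (E B : {set Q}) : nat :=
  #|[set E' : {set Q} | [&& is_block P E', set_rel tr [set rep E] E' & set_rel R B E']]|.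

Definition splitter1 (tr P R : rel Q) (rep : {set Q} -> Q) (E B : {set Q}) : Prop :=
  [/\ is_block P E, is_block R B, set_rel tr E B & RelCount tr P R rep E B = 0].

Definition succ_blocks_in (tr P : rel Q) (rep : {set Q} -> Q) (E B : {set Q}) : nat :=
  #|[set Eb : {set Q} | [exists b, [&& Eb == block P b, Eb \subset B & tr (rep E) b]]]|.

Definition splitter2 (tr P R : rel Q) (rep : {set Q} -> Q) (E B : {set Q}) : Prop :=
  [/\ is_block P E, is_block R B, set_rel tr [set rep E] B,
      RelCount tr P R rep E B = succ_blocks_in tr P rep E B
    & ~~ (E \subset pre tr B)].

Definition NotRel_img (U R : rel Q) (B : {set Q}) : {set Q} :=
  [set q' | [exists q in B, U q q' && ~~ R q q']].

End Defs.

(* Main.v *)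
Require Import Defs.
From mathcomp Require Import all_boot.

Theorem proposition5 (Q : finType) (tr U R P : rel Q) (rep : {set Q} -> Q)
  (hU : is_preorder U) (hR : is_preorder R) (hRU : forall x y, R x y -> U x y)
  (* R o ->^{-1} subset of ->^{-1} o U *)
  (hsim : forall x y z, tr z x -> R z y -> exists w, U x w && tr y w)
  (hP : is_equivalence P) (hPR : forall x y, P x y -> R x y)
  (hrep : forall E, is_block P E -> rep E \in E) :
  (forall E B, splitter1 tr P R rep E B -> NotRel_img U R B != set0) /\
  ((forall E B, ~ splitter1 tr P R rep E B) ->
   forall E B, splitter2 tr P R rep E B -> NotRel_img U R B != set0).
Proof.
have [Prefl [Psym Ptr]] := hP.
have [Rrefl Rtr] := hR.
have inblk : forall (r : rel Q) q x, (x \in block r q) = r q x && r x q.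
  by move=> r q x; rewrite inE.
have Psame : forall q x y, x \in block P q -> y \in block P q -> P x y.
  move=> q x y; rewrite !inblk => /andP[_ hxq] /andP[hqy _].
  exact: Ptr hxq hqy.
split.
- move=> E B [hEb hBb /existsP[x /andP[xE /existsP[y /andP[yB xy]]]] hcnt].
  have repE := hrep E hEb.
  case/existsP: hEb => q /eqP hE.
  have Pxr : P x (rep E) by apply: (Psame q); rewrite -hE.
  have [w /andP[Uyw rw]] := hsim y (rep E) x xy (hPR _ _ Pxr).
  apply/set0Pn; exists w; rewrite inE; apply/existsP; exists y.
  rewrite yB Uyw /=; apply/negP => Ryw.
  move: hcnt; rewrite /RelCount.
  set S := [set E' : {set Q} | _] => hcnt.
  have hS : S = set0 by apply/eqP; rewrite -cards_eq0 hcnt.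
  suff : block P w \in S by rewrite hS inE.
  rewrite inE; apply/and3P; split.
  + by apply/existsP; exists w.
  + apply/existsP; exists (rep E); rewrite set11 /=; apply/existsP; exists w.
    by rewrite inblk Prefl rw.
  + apply/existsP; exists y; rewrite yB /=; apply/existsP; exists w.
    by rewrite inblk Prefl Ryw.
- move=> nos1 E B [hEb hBb /existsP[r0 /andP[r0in /existsP[b0 /andP[b0B rb0]]]] hcnt hnsub].
  have repE := hrep E hEb.
  move: r0in; rewrite in_set1 => /eqP Hr0; subst r0.
  case/subsetPn: hnsub => x xE xnpre.
  case/existsP: (hEb) => q /eqP hE.
  have Prx : P (rep E) x by apply: (Psame q); rewrite -hE.
  have [w /andP[Ubw xw]] := hsim b0 x (rep E) rb0 (hPR _ _ Prx).
  apply/set0Pn; exists w; rewrite inE; apply/existsP; exists b0.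
  rewrite b0B Ubw /=; apply/negP => Rbw.
  case/existsP: hBb => qb /eqP hB.
  have wnB : w \notin B.
    by apply: contra xnpre => wB; rewrite inE; apply/existsP; exists w; rewrite wB.
  have : RelCount tr P R rep E (block R w) != 0.
    apply/negP => /eqP h0; apply: (nos1 E (block R w)); split => //.
    - by apply/existsP; exists w.
    - apply/existsP; exists x; rewrite xE /=; apply/existsP; exists w.
      by rewrite inblk Rrefl xw.
  rewrite /RelCount cards_eq0 => /set0Pn [E' hE'].
  move: hcnt hE'; rewrite /RelCount /succ_blocks_in.
  set S1 := [set E' : {set Q} | [&& is_block P E', set_rel tr [set rep E] E' & set_rel R B E']].
  set S2 := [set Eb : {set Q} | [exists b, [&& Eb == block P b, Eb \subset B & tr (rep E) b]]].
  move=> hcnt hE'.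
  have sub21 : S2 \subset S1.
    apply/subsetP => Eb; rewrite inE => /existsP[b /and3P[/eqP -> sB rb]].
    have bb : b \in block P b by rewrite inblk Prefl.
    rewrite inE; apply/and3P; split.
    + by apply/existsP; exists b.
    + apply/existsP; exists (rep E); rewrite set11 /=; apply/existsP; exists b.
      by rewrite bb.
    + apply/existsP; exists b; rewrite (subsetP sB _ bb) /=.
      by apply/existsP; exists b; rewrite bb Rrefl.
  have e12 : S1 =i S2.
    by move=> z; symmetry; move: z; apply/subset_cardP => //.
  move: hE'; rewrite inE => /and3P[hE'b hE'r /existsP[u /andP[uB' /existsP[v /andP[vE' Ruv]]]]].
  have hE2 : E' \in S1.
    rewrite inE hE'b hE'r /=; apply/existsP; exists b0; rewrite b0B /=.
    apply/existsP; exists v; rewrite vE' /=.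
    move: uB'; rewrite inblk => /andP[Rwu _].
    exact: (Rtr w b0 v Rbw (Rtr u w v Rwu Ruv)).
  rewrite e12 in hE2.
  move: hE2; rewrite inE => /existsP[b /and3P[_ sB _]].
  have vB := subsetP sB _ vE'.
  move: uB'; rewrite inblk => /andP[Rwu _].
  move: (vB) (b0B); rewrite hB !inblk => /andP[_ Rvq] /andP[Rqb0 _].
  have Rwq : R w qb := Rtr v w qb (Rtr u w v Rwu Ruv) Rvq.
  have Rqw : R qb w := Rtr b0 qb w Rqb0 Rbw.
  by move: wnB; rewrite hB inblk Rwq Rqw.
Qed.
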